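(* Let $\sigma>0$, $\zeta_*\in[0,1]$, $\gamma_*>0$, and $\nu_*=(1-\zeta_* )\delta_0+\zeta_*\delta_{\gamma_*}$. Let $S(0,0)$ be the set of probability distributions $\nu$ on $\mathbb{R}$ with $\nu((0,\infty))=0$. Then \[ \inf_{\nu\in S(0,0)}\|F_\nu-F_{\nu_*}\|_\infty\ \ge\ \zeta_*\left(\Phi_\sigma(\tfrac12\gamma_* )-\Phi_\sigma(-\tfrac12\gamma_* )\right), \] where $\Phi_\sigma$ is the CDF of $\mathcal{N}(0,\sigma^2)$. Furthermore, if $\gamma_*<\sigma$, then \[ \inf_{\nu\in S(0,0)}\|F_\nu-F_{\nu_*}\|_\infty\ \ge\ \frac{23\zeta_*\gamma_*}{24\sigma\sqrt{2\pi}}. \]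
   Context: $\delta_x$ denotes the point mass at $x$. For a probability distribution $\nu$ on $\mathbb{R}$, $F_\nu(t):=\mathbb{P}_{\mu\sim\nu,\,X\sim\mathcal{N}(\mu,\sigma^2)}(X\le t)$, and $\|\cdot\|_\infty$ is the sup norm over $t\in\mathbb{R}$. *)

(* Defs.v *)
From HB Require Import structures.
From mathcomp Require Import all_boot all_order all_algebra.
From mathcomp Require Import all_classical all_reals all_analysis.
Set Implicit Arguments. Unset Strict Implicit. Unset Printing Implicit Defensive.
Import Order.TTheory GRing.Theory Num.Theory.
Import numFieldNormedType.Exports.
Local Open Scope classical_set_scope.
Local Open Scope ring_scope.

(* Phi_sigma: the CDF of N(0, sigma^2)  (normal_prob m s has mean m, std s). *)
Definition Phi {R : realType} (sigma x : R) : R :=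
  fine (normal_prob 0 sigma `]-oo, x]).

(* F_nu(t) = P(X <= t) where mu ~ nu and X | mu ~ N(mu, sigma^2),
   i.e. the mixture probability  \int nu(dmu) P_{N(mu,sigma^2)}((-oo,t]). *)
Definition Fmix {R : realType} (sigma : R) (nu : set R -> \bar R) (t : R) : R :=
  fine (\int[nu]_(mu in setT) normal_prob mu sigma `]-oo, t])%E.

Definition supnorm {R : realType} (f : R -> R) : \bar R :=
  ereal_sup (range (fun t => (`| f t |)%:E)).

Definition S00 {R : realType} : set (probability R R) :=
  [set nu : probability R R | nu `]0%R, +oo[%classic = 0%E].

(* Main.v *)
Require Import Defs.
From HB Require Import structures.
From mathcomp Require Import all_boot all_order all_algebra.
From mathcomp Require Import all_classical all_reals all_analysis.
From mathcomp Require Import measurable_realfun.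
From mathcomp Require Import lra ring.
Import Order.TTheory GRing.Theory Num.Theory.
Import numFieldNormedType.Exports.
Local Open Scope classical_set_scope.
Local Open Scope ring_scope.

Section S.
Variable R : realType.
Variable sigma : R.
Hypothesis s0 : 0 < sigma.

Lemma pdf_shift m x : normal_pdf m sigma x = normal_pdf 0 sigma (x - m).
Proof.
rewrite /normal_pdf gt_eqF//.
by rewrite /normal_fun subr0.
Qed.

Lemma shift_derive (m : R) : ((fun x : R => x - m)^`())%classic = cst 1.
Proof.
by apply/funext => x; rewrite derive1E deriveD// derive_id derive_cst addr0.
Qed.

Lemma nprob_shift m t :
  normal_prob m sigma `]-oo, t] = normal_prob 0 sigma `]-oo, t - m].
Proof.
rewrite /normal_prob.
have -> : t - m = (fun x => x - m) t by [].
rewrite (@increasing_ge0_integration_by_substitutionNy _ (fun x => x - m) (normal_pdf 0 sigma)).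
- apply: eq_integral => x _ /=.
  by rewrite pdf_shift shift_derive /= mulr1.
- by move=> x y _ _ xy; rewrite ltrBlDr subrK.
- by rewrite shift_derive => x _; exact: cvg_cst.
- by rewrite shift_derive; exact: is_cvg_cst.
- by rewrite shift_derive; exact: cvg_cst.
- split.
  + by move=> x _; apply: derivableB.
  + apply: cvg_at_left_filter. apply: (@cvgB _ R^o); [exact: cvg_id|exact: cvg_cst].
- exact: cvg_addrr_Ny.
- apply: continuous_subspaceT => x; apply: continuous_normal_pdf; by rewrite gt_eqF.
- by move=> x _; exact: normal_pdf_ge0.
Qed.

Lemma P0_fin x : normal_prob 0 sigma `]-oo, x] = (Phi sigma x)%:E.
Proof.
rewrite /Phi fineK// ge0_fin_numE ?measure_ge0//.
by rewrite (le_lt_trans (probability_le1 _ _)) ?ltry.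
Qed.

Lemma Phi_ge0 x : 0 <= Phi sigma x.
Proof. by rewrite -lee_fin -P0_fin measure_ge0. Qed.

Lemma Phi_le1 x : Phi sigma x <= 1.
Proof. by rewrite -lee_fin -P0_fin probability_le1. Qed.

Lemma Phi_nd : {homo Phi sigma : x y / x <= y}.
Proof.
move=> x y xy; rewrite -lee_fin -!P0_fin.
apply: le_measure; rewrite ?inE //.
by apply: subset_itvl; rewrite bnd_simp.
Qed.

Lemma nprobE m t : normal_prob m sigma `]-oo, t] = (Phi sigma (t - m))%:E.
Proof. by rewrite nprob_shift P0_fin. Qed.

Lemma mPhi (t : R) : measurable_fun setT (fun m : R => (Phi sigma (t - m))%:E).
Proof.
apply/measurable_EFinP; apply: measurableT_comp.
  exact: measurable_realfun.nondecreasing_measurable Phi_nd.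
exact: measurable_funB.
Qed.

Lemma Fmix_lb (nu : probability R R) t : nu `]0%R, +oo[%classic = 0%E ->
  Phi sigma t <= Fmix sigma nu t.
Proof.
move=> nu0.
rewrite /Fmix.
under eq_integral do rewrite nprobE.
set I := (\int[nu]_(_ in _) _)%E.
have I1 : (I <= 1)%E.
  apply: (@le_trans _ _ (\int[nu]_(x in setT) (cst 1%E x))%E).
    apply: ge0_le_integral => //.
    - by move=> x _; rewrite lee_fin Phi_ge0.
    - exact: mPhi.
    - by move=> x _; rewrite lee_fin Phi_le1.
  by rewrite integral_cst// mul1e; apply: probability_le1.
have I0 : ((Phi sigma t)%:E <= I)%E.
  apply: (@le_trans _ _ (\int[nu]_(x in `]-oo, 0%R]) (Phi sigma (t - x))%:E)%E); last first.
    apply: ge0_subset_integral => //.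
    - exact: mPhi.
    - by move=> x _; rewrite lee_fin Phi_ge0.
  apply: (@le_trans _ _ (\int[nu]_(x in `]-oo, 0%R]) (cst (Phi sigma t)%:E x))%E); last first.
    apply: ge0_le_integral => //.
    - by move=> x _; rewrite lee_fin Phi_ge0.
    - exact: measurable_funTS (mPhi t).
    - move=> x; rewrite /= in_itv /= => x0; rewrite lee_fin; apply: Phi_nd.
      lra.
  rewrite integral_cst//.
  have n1 : nu `]-oo, 0%R]%classic = 1%E.
    by rewrite -setCitvr probability_setC// nu0 sube0.
  rewrite le_eqVlt; apply/orP; left; apply/eqP; rewrite -[LHS]mule1; congr (_ * _)%E; exact/esym/n1.
have If : I \is a fin_num.
  by rewrite ge0_fin_numE ?(le_trans _ I0) ?lee_fin ?Phi_ge0 ?(le_lt_trans I1) ?ltry.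
by move: I0; rewrite -(fineK If) lee_fin.
Qed.

Lemma Fmix_star (nu : probability R R) (zeta gamma t : R) : 0 <= zeta <= 1 ->
  (forall A : set R, measurable A ->
     nu A = ((1 - zeta)%:E * \d_(0%R : R) A + zeta%:E * \d_gamma A)%E) ->
  Fmix sigma nu t = (1 - zeta) * Phi sigma t + zeta * Phi sigma (t - gamma).
Proof.
move=> /andP[z0 z1] hnu.
have z1' : 0 <= 1 - zeta by rewrite subr_ge0.
rewrite /Fmix.
under eq_integral do rewrite nprobE.
rewrite (eq_measure_integral (measure_add (mscale (NngNum z1') \d_(0%R : R)) (mscale (NngNum z0) \d_gamma))); last first.
  move=> A mA _; apply: (@eq_trans _ _ ((1 - zeta)%:E * \d_(0%R : R) A + zeta%:E * \d_gamma A)%E); first exact: hnu.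
  by rewrite [RHS]measure_addE.
rewrite ge0_integral_measure_add //; last 2 first.
- by move=> x _; rewrite lee_fin Phi_ge0.
- exact: mPhi.
rewrite !ge0_integral_mscale //; last 4 first.
- exact: mPhi.
- by move=> x _; rewrite lee_fin Phi_ge0.
- exact: mPhi.
- by move=> x _; rewrite lee_fin Phi_ge0.
rewrite !integral_dirac //; last 2 first.
- exact: mPhi.
- exact: mPhi.
rewrite !diracT !mul1e /= subr0.
by [].
Qed.

Lemma Phi_diff_lb (gamma : R) : 0 < gamma -> gamma < sigma ->
  (23 * gamma) / (24 * sigma * Num.sqrt (2 * pi)) <=
  Phi sigma (gamma / 2) - Phi sigma (- (gamma / 2)).
Proof.
move=> g0 gs.
set a := gamma / 2.
have a0 : 0 < a by rewrite /a divr_gt0.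
have sp : normal_prob 0 sigma `]-oo, a] =
   (normal_prob 0 sigma `]-oo, (- a)%R] + normal_prob 0 sigma `](- a)%R, a])%E.
  rewrite (@itv_bndbnd_setU _ _ _ (BRight (- a))) ?bnd_simp//; last first.
    lra.
  rewrite measureU//.
  apply/seteqP; split => x //=; rewrite !in_itv /= => -[h1 /andP[h2 _]]; lra.
have hJ : normal_prob 0 sigma `](- a)%R, a] = (Phi sigma a - Phi sigma (- a))%:E.
  have Jf : normal_prob 0 sigma `](- a)%R, a] \is a fin_num.
    by rewrite ge0_fin_numE ?measure_ge0// (le_lt_trans (probability_le1 _ _)) ?ltry.
  have h : Phi sigma a = Phi sigma (- a) + fine (normal_prob 0 sigma `](- a)%R, a]).
    apply: EFin_inj; rewrite EFinD (fineK Jf); move: sp; rewrite !P0_fin => H; exact: H.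
  have -> : Phi sigma a - Phi sigma (- a) = fine (normal_prob 0 sigma `](- a)%R, a]).
    rewrite h; ring.
  by rewrite fineK.
set k := (sigma ^+ 2 *+ 2)^-1.
set p := normal_peak sigma.
have k0 : 0 < k by rewrite /k invr_gt0 pmulrn_lgt0 // exprn_gt0.
have hk : k * (sigma ^+ 2 *+ 2) = 1 by rewrite mulVf // gt_eqF // pmulrn_lgt0 // exprn_gt0.
have p0 : 0 <= p by exact: normal_peak_ge0.
pose f x := p * (1 - x ^+ 2 * k).
pose F x := p * (x - x ^+ 3 * k / 3).
have dF x : is_derive x (1:R) F (f x).
  rewrite /F /f; apply: is_derive_eq.
  by rewrite /GRing.scale /= !(mulr0, addr0, mulr1); field.
have df x : derivable f x 1.
  rewrite /f; apply: ex_derive.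
have cf : continuous f.
  by move=> x; apply: differentiable_continuous; apply/derivable1_diffP.
have mf : measurable_fun setT (fun x => (f x)%:E).
  by apply/measurable_EFinP; exact: continuous_measurable_fun.
have I1 : (\int[lebesgue_measure]_(x in `[(- a)%R, a]) (f x)%:E = (F a - F (- a))%:E)%E.
  rewrite (@continuous_FTC2 _ f F) //.
  - lra.
  - exact: continuous_subspaceT.
  - split.
    + by move=> x _; case: (dF x).
    + apply: cvg_at_right_filter; apply: differentiable_continuous; apply/derivable1_diffP; by case: (dF (- a)).
    + apply: cvg_at_left_filter; apply: differentiable_continuous; apply/derivable1_diffP; by case: (dF a).
  - by move=> x _; rewrite derive1E; case: (dF x).
have hk2 : k * sigma ^+ 2 * 2 = 1 by rewrite -mulrA mulr_natr.
have key : ((F a - F (- a))%:E <= normal_prob 0 sigma `](- a)%R, a])%E.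
  rewrite /normal_prob integral_itv_obnd_cbnd; last first.
    by apply/measurable_funTS/measurable_EFinP; exact: measurable_normal_pdf.
  rewrite -I1; apply: ge0_le_integral => //.
  - move=> x; rewrite /= in_itv /= => /andP[h1 h2]; rewrite lee_fin /f.
    apply: mulr_ge0 => //; rewrite subr_ge0.
    have hx : x ^+ 2 * k <= sigma ^+ 2 * k * 2.
      have : x ^+ 2 <= sigma ^+ 2 * 2 by rewrite /a in h1 h2; nra.
      nra.
    by apply: (le_trans hx); rewrite (mulrC (sigma ^+ 2)) hk2.
  - exact: measurable_funTS mf.
  - by apply/measurable_funTS/measurable_EFinP; exact: measurable_normal_pdf.
  - move=> x _; rewrite lee_fin /f /normal_pdf gt_eqF// /normal_fun subr0.
    rewrite -/p; apply: ler_wpM2l => //.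
    apply: le_trans (expR_ge1Dx _).
    by rewrite /k mulNr.
rewrite hJ lee_fin in key; apply: le_trans key.
set q := sigma * Num.sqrt (2 * pi).
have q0 : 0 < q by rewrite /q mulr_gt0 // sqrtr_gt0 mulr_gt0 // pi_gt0.
have hp : p = q^-1.
  rewrite /p /normal_peak /q; congr (_^-1).
  rewrite -mulrnAr sqrtrM ?sqr_ge0 // sqrtr_sqr gtr0_norm // -mulr_natl mulrC.
  by [].
have -> : F a - F (- a) = q^-1 * (gamma - gamma ^+ 3 * k / 12).
  by rewrite /F hp /a; field; rewrite gt_eqF.
have -> : 23 * gamma / (24 * sigma * Num.sqrt (2 * pi)) = q^-1 * (23 * gamma / 24).
  by rewrite /q -mulrA; field; rewrite !gt_eqF // sqrtr_gt0 mulr_gt0 // pi_gt0.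
have g2 : gamma ^+ 2 * k <= sigma ^+ 2 * k by nra.
have h : 23 * gamma / 24 <= gamma - gamma ^+ 3 * k / 12 by nra.
have qi : 0 <= q^-1 by rewrite invr_ge0 ltW.
exact: (ler_wpM2l qi h).
Qed.
End S.


Theorem lemma2 (R : realType) (sigma zeta gamma : R) (nu_star : probability R R) :
  0 < sigma -> 0 <= zeta <= 1 -> 0 < gamma ->
  (forall A : set R, measurable A ->
     nu_star A = ((1 - zeta)%:E * \d_(0%R : R) A + zeta%:E * \d_gamma A)%E) ->
  ((zeta * (Phi sigma (gamma / 2) - Phi sigma (- (gamma / 2))))%R%:E
     <= ereal_inf [set supnorm (fun t => (Fmix sigma nu t - Fmix sigma nu_star t)%R)
                  | nu in S00])%E
  /\
  ((gamma < sigma)%R ->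
   ((23 * zeta * gamma) / (24 * sigma * Num.sqrt (2 * pi)))%R%:E
     <= ereal_inf [set supnorm (fun t => (Fmix sigma nu t - Fmix sigma nu_star t)%R)
                  | nu in S00])%E.
Proof.
move=> s0 hz g0 hnu.
have z0 : 0 <= zeta by case/andP: hz.
have part1 : ((zeta * (Phi sigma (gamma / 2) - Phi sigma (- (gamma / 2))))%R%:E
     <= ereal_inf [set supnorm (fun t => (Fmix sigma nu t - Fmix sigma nu_star t)%R)
                  | nu in S00])%E.
  apply/ereal_infP => _ [nu Snu <-].
  apply: le_trans (ereal_sup_ubound _); last first.
    by exists (gamma / 2).
  rewrite lee_fin; apply: le_trans (ler_norm _).
  rewrite (@Fmix_star _ _ s0 _ _ _ _ hz hnu).
  have := @Fmix_lb _ _ s0 _ (gamma / 2) Snu.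
  have -> : gamma / 2 - gamma = - (gamma / 2) by field.
  move=> h.
  have : Phi sigma (gamma / 2) - ((1 - zeta) * Phi sigma (gamma / 2) + zeta * Phi sigma (- (gamma / 2)))
     = zeta * (Phi sigma (gamma / 2) - Phi sigma (- (gamma / 2))) by ring.
  move=> <-; lra.
split => //.
move=> gs; apply: le_trans part1.
rewrite lee_fin.
have := @Phi_diff_lb _ _ s0 _ g0 gs.
move=> h.
have -> : 23 * zeta * gamma / (24 * sigma * Num.sqrt (2 * pi)) =
  zeta * (23 * gamma / (24 * sigma * Num.sqrt (2 * pi))) by rewrite !mulrA (mulrC 23).
move: h; set X := 23 * gamma / _; set Y := Phi sigma _ - _ => h.
have h2 : 0 <= zeta * (Y - X) by apply: mulr_ge0 => //; rewrite subr_ge0.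
lra.
Qed.
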